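(* Let $a>b\geq c>d>0$ be real numbers and define $f:\mathbb{R}\to\mathbb{R}$ by $$f(x)=\frac{a^x-b^x}{c^x-d^x}\quad (x\neq 0),\qquad f(0)=\frac{\ln(a/b)}{\ln(c/d)}.$$ Then $f$ is strictly convex on $\mathbb{R}$.
   Context: The value $f(0)$ is the continuous extension of $\frac{a^x-b^x}{c^x-d^x}$ at $x=0$. *)

(* Defs.v *)
From Stdlib Require Import Reals Lra.
Open Scope R_scope.

Definition f_abcd (a b c d x : R) : R :=
  if Req_EM_T x 0 then ln (a / b) / ln (c / d)
  else (Rpower a x - Rpower b x) / (Rpower c x - Rpower d x).

Definition strictly_convex (g : R -> R) : Prop :=
  forall x y t : R, x < y -> 0 < t < 1 ->
    g (t * x + (1 - t) * y) < t * g x + (1 - t) * g y.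

(* Main.v *)
Require Import Defs.
From Stdlib Require Import Reals.
From Coquelicot Require Import Coquelicot.
From Stdlib Require Import Lra Psatz.
Open Scope R_scope.
Lemma loc_eq (F F0 : R -> R) x y u : x < u < y ->
  (forall v, x < v < y -> F v = F0 v) -> locally u (fun t => F0 t = F t).
Proof.
  intros Hu H.
  assert (He : 0 < Rmin (u - x) (y - u)) by (apply Rmin_glb_lt; lra).
  exists (mkposreal _ He). intros t Ht.
  change (Rabs (t - u) < Rmin (u - x) (y - u)) in Ht.
  symmetry; apply H.
  assert (Rmin (u - x) (y - u) <= u - x) by apply Rmin_l.
  assert (Rmin (u - x) (y - u) <= y - u) by apply Rmin_r.
  apply Rabs_def2 in Ht. lra.
Qed.

Lemma deriv_cont (F : R -> R) u l : is_derive F u l -> continuity_pt F u.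
Proof.
  intro H. apply continuity_pt_filterlim. apply (ex_derive_continuous F u).
  exists l; exact H.
Qed.

Lemma mvt_open (F F0 dF : R -> R) x y : x < y ->
  (forall u, x <= u <= y -> continuity_pt F u) ->
  (forall u, x < u < y -> F u = F0 u) ->
  (forall u, x < u < y -> is_derive F0 u (dF u)) ->
  exists c, x < c < y /\ F y - F x = dF c * (y - x).
Proof.
  intros Hxy Hc Heq Hd.
  assert (Hd' : forall u, x < u < y -> derivable_pt_lim F u (dF u)).
  { intros u Hu. apply is_derive_Reals.
    apply (is_derive_ext_loc F0 F). apply (loc_eq F F0 x y); auto.
    apply Hd; auto. }
  set (pr1 := fun c (P : x < c < y) => exist (fun l => derivable_pt_lim F c l) (dF c) (Hd' c P)).
  set (pr2 := fun c (P : x < c < y) => derivable_pt_id c).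
  destruct (MVT F id x y pr1 pr2 Hxy Hc (fun c _ => derivable_continuous_pt _ _ (derivable_pt_id c))) as [c [P HP]].
  exists c; split; auto.
  unfold pr1, pr2 in HP. simpl in HP. rewrite derive_pt_id in HP. unfold id in HP. lra.
Qed.

Lemma mono_le (F F0 dF : R -> R) x y : x <= y ->
  (forall u, x <= u <= y -> continuity_pt F u) ->
  (forall u, x < u < y -> F u = F0 u) ->
  (forall u, x < u < y -> is_derive F0 u (dF u)) ->
  (forall u, x < u < y -> 0 <= dF u) -> F x <= F y.
Proof.
  intros Hxy Hc Heq Hd Hp. destruct (Req_dec x y) as [->|Hne]; [lra|].
  destruct (mvt_open F F0 dF x y) as [c [Hc1 Hc2]]; auto; try lra.
  specialize (Hp c Hc1). nra.
Qed.

Lemma mono_lt (F F0 dF : R -> R) x y : x < y ->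
  (forall u, x <= u <= y -> continuity_pt F u) ->
  (forall u, x < u < y -> F u = F0 u) ->
  (forall u, x < u < y -> is_derive F0 u (dF u)) ->
  (forall u, x < u < y -> 0 < dF u) -> F x < F y.
Proof.
  intros Hxy Hc Heq Hd Hp.
  destruct (mvt_open F F0 dF x y) as [c [Hc1 Hc2]]; auto.
  specialize (Hp c Hc1). nra.
Qed.

Lemma conv3_deriv (F F0 dF : R -> R) u v w : u < v < w ->
  (forall z, u <= z <= w -> continuity_pt F z) ->
  (forall z, u < z < w -> F z = F0 z) ->
  (forall z, u < z < w -> is_derive F0 z (dF z)) ->
  (forall z1 z2, u < z1 -> z1 <= z2 -> z2 < w -> dF z1 <= dF z2) ->
  (F v - F u) * (w - u) <= (F w - F u) * (v - u).
Proof.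
  intros Huv Hc Heq Hd Hm.
  destruct (mvt_open F F0 dF u v) as [c1 [Hc1 E1]]; try lra.
  { intros; apply Hc; lra. } { intros; apply Heq; lra. } { intros; apply Hd; lra. }
  destruct (mvt_open F F0 dF v w) as [c2 [Hc2 E2]]; try lra.
  { intros; apply Hc; lra. } { intros; apply Heq; lra. } { intros; apply Hd; lra. }
  assert (dF c1 <= dF c2) by (apply Hm; lra).
  assert (Fw : F w - F u = dF c1 * (v - u) + dF c2 * (w - v)) by lra.
  rewrite Fw, E1.
  assert (0 <= (v - u) * (w - v) * (dF c2 - dF c1)).
  { apply Rmult_le_pos; [apply Rmult_le_pos|]; lra. }
  nra.
Qed.

Definition conv3 (F : R -> R) := forall u v w, u < v < w ->
  (F v - F u) * (w - u) <= (F w - F u) * (v - u).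

Lemma glue_mid (F : R -> R) m u w : u < 0 < w ->
  (forall y, F 0 + m * y <= F y) ->
  (F 0 - F u) * (w - u) <= (F w - F u) * (0 - u).
Proof.
  intros H Hs. pose proof (Hs u). pose proof (Hs w). nra.
Qed.

Lemma glue (F : R -> R) m :
  (forall y, F 0 + m * y <= F y) ->
  (forall u v w, 0 <= u -> u < v < w -> (F v - F u) * (w - u) <= (F w - F u) * (v - u)) ->
  (forall u v w, w <= 0 -> u < v < w -> (F v - F u) * (w - u) <= (F w - F u) * (v - u)) ->
  conv3 F.
Proof.
  intros Hs HR HL u v w Huvw.
  destruct (Rle_or_lt 0 u) as [Hu|Hu]; [apply HR; auto|].
  destruct (Rle_or_lt w 0) as [Hw|Hw]; [apply HL; auto|].
  pose proof (glue_mid F m u w (conj Hu Hw) Hs) as M.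
  destruct (Rtotal_order v 0) as [Hv|[Hv|Hv]].
  - pose proof (HL u v 0 (Rle_refl 0) (conj (proj1 Huvw) Hv)) as L.
    assert (Hneg: 0 < - u) by lra.
    apply (Rmult_le_reg_r (- u)); auto.
    apply Rle_trans with ((F 0 - F u) * (v - u) * (w - u)).
    + replace ((F v - F u) * (w - u) * - u) with (((F v - F u) * (0 - u)) * (w - u)) by ring.
      apply Rmult_le_compat_r; lra.
    + replace ((F w - F u) * (v - u) * - u) with (((F w - F u) * (0 - u)) * (v - u)) by ring.
      replace ((F 0 - F u) * (v - u) * (w - u)) with (((F 0 - F u) * (w - u)) * (v - u)) by ring.
      apply Rmult_le_compat_r; lra.
  - subst v. exact M.
  - pose proof (HR 0 v w (Rle_refl 0) (conj Hv (proj2 Huvw))) as R.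
    set (s1 := (F 0 - F u) / (0 - u)). set (s2 := (F v - F 0) / v). set (s3 := (F w - F v) / (w - v)).
    assert (E1 : F 0 - F u = s1 * (0 - u)) by (unfold s1; field; lra).
    assert (E2 : F v - F 0 = s2 * v) by (unfold s2; field; lra).
    assert (E3 : F w - F v = s3 * (w - v)) by (unfold s3; field; lra).
    assert (A : F v - F u = s1 * (0 - u) + s2 * v) by lra.
    assert (B : F w - F u = s1 * (0 - u) + s2 * v + s3 * (w - v)) by lra.
    assert (Hs23 : s2 <= s3).
    { replace (F v - F 0) with (s2 * (v - 0)) in R by lra.
      replace (F w - F 0) with (s2 * v + s3 * (w - v)) in R by lra.
      destruct (Rle_or_lt s2 s3) as [|Hc]; auto; exfalso.
      assert (0 < (s2 - s3) * (v * (w - v))) by (apply Rmult_lt_0_compat; [lra|apply Rmult_lt_0_compat; lra]).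
      nra. }
    assert (Hs13 : s1 * w <= s2 * v + s3 * (w - v)).
    { rewrite E1 in M. replace (F w - F u) with (s1 * (0 - u) + s2 * v + s3 * (w - v)) in M by lra.
      apply (Rmult_le_reg_r (- u)); [lra|]. nra. }
    assert (s1 <= s3).
    { assert (s1 * w <= s3 * w) by nra.
      destruct (Rle_or_lt s1 s3) as [|Hc]; auto; exfalso.
      assert (0 < (s1 - s3) * w) by (apply Rmult_lt_0_compat; lra). nra. }
    assert (K : s1 * (0 - u) + s2 * v <= s3 * (v - u)) by nra.
    rewrite A, B.
    replace ((s1 * (0 - u) + s2 * v + s3 * (w - v)) * (v - u)) with
      ((s1 * (0 - u) + s2 * v) * (v - u) + s3 * (w - v) * (v - u)) by ring.
    replace ((s1 * (0 - u) + s2 * v) * (w - u)) with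
      ((s1 * (0 - u) + s2 * v) * (v - u) + (s1 * (0 - u) + s2 * v) * (w - v)) by ring.
    assert ((s1 * (0 - u) + s2 * v) * (w - v) <= s3 * (v - u) * (w - v)) by (apply Rmult_le_compat_r; lra).
    lra.
Qed.

Definition convexw (F : R -> R) := forall x y t, x < y -> 0 < t < 1 ->
  F (t * x + (1 - t) * y) <= t * F x + (1 - t) * F y.
Definition incr (F : R -> R) := forall x y, x < y -> F x < F y.

Lemma conv3_convexw F : conv3 F -> convexw F.
Proof.
  intros H x y t Hxy Ht.
  assert (Hv : x < t * x + (1 - t) * y < y) by nra.
  pose proof (H _ _ _ (conj (proj1 Hv) (proj2 Hv))) as K.
  replace (t * x + (1 - t) * y - x) with ((1 - t) * (y - x)) in K by ring.
  assert (F (t * x + (1 - t) * y) - F x <= (F y - F x) * (1 - t)).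
  { apply (Rmult_le_reg_r (y - x)); [lra|]. nra. }
  lra.
Qed.

Lemma prod_strict F G : (forall x, 0 < F x) -> (forall x, 0 < G x) ->
  incr F -> incr G -> convexw F -> convexw G ->
  strictly_convex (fun x => F x * G x).
Proof.
  intros PF PG IF IG CF CG x y t Hxy Ht.
  set (z := t * x + (1 - t) * y).
  pose proof (CF x y t Hxy Ht) as C1. pose proof (CG x y t Hxy Ht) as C2. fold z in C1, C2.
  pose proof (IF x y Hxy). pose proof (IG x y Hxy).
  pose proof (PF z). pose proof (PG z).
  apply Rle_lt_trans with ((t * F x + (1 - t) * F y) * (t * G x + (1 - t) * G y)).
  - apply Rle_trans with ((t * F x + (1 - t) * F y) * G z).
    + apply Rmult_le_compat_r; lra.
    + apply Rmult_le_compat_l; lra.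
  - assert (0 < t * (1 - t) * ((F y - F x) * (G y - G x))).
    { apply Rmult_lt_0_compat; [nra|]. apply Rmult_lt_0_compat; lra. }
    nra.
Qed.

Lemma prod_strict2 E H : (forall x, 0 < E x) -> (forall x, 0 < H x) ->
  (forall x y, x < y -> E x <= E y) -> (forall x y, x < y -> H x <= H y) ->
  convexw E -> strictly_convex H ->
  strictly_convex (fun x => E x * H x).
Proof.
  intros PF PG IF IG CF CG x y t Hxy Ht.
  set (z := t * x + (1 - t) * y).
  pose proof (CF x y t Hxy Ht) as C1. pose proof (CG x y t Hxy Ht) as C2. fold z in C1, C2.
  pose proof (IF x y Hxy). pose proof (IG x y Hxy).
  pose proof (PF z). pose proof (PG z).
  apply Rlt_le_trans with ((t * E x + (1 - t) * E y) * (t * H x + (1 - t) * H y)).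
  - apply Rle_lt_trans with ((t * E x + (1 - t) * E y) * H z).
    + apply Rmult_le_compat_r; lra.
    + apply Rmult_lt_compat_l; lra.
  - assert (0 <= t * (1 - t) * ((E y - E x) * (H y - H x))).
    { apply Rmult_le_pos; [nra|]. apply Rmult_le_pos; lra. }
    nra.
Qed.

Lemma scale_pos F k : (forall x, 0 < F x) -> forall x, 0 < F (k * x).
Proof. auto. Qed.
Lemma scale_incr F k : 0 < k -> incr F -> incr (fun x => F (k * x)).
Proof. intros Hk H x y Hxy. apply H. nra. Qed.
Lemma scale_conv F k : 0 < k -> convexw F -> convexw (fun x => F (k * x)).
Proof.
  intros Hk H x y t Hxy Ht. simpl.
  replace (k * (t * x + (1 - t) * y)) with (t * (k * x) + (1 - t) * (k * y)) by ring.
  apply H; auto. nra.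
Qed.

Lemma exp_conv r : convexw (fun x => exp (r * x)).
Proof.
  intros x y t Hxy Ht. set (z := r * (t * x + (1 - t) * y)).
  pose proof (exp_ineq1_le (r * x - z)). pose proof (exp_ineq1_le (r * y - z)).
  unfold Rminus in *. rewrite !exp_plus, !exp_Ropp in *.
  pose proof (exp_pos z).
  assert (A : exp z * (1 + (r * x + - z)) <= exp (r * x)).
  { replace (exp (r * x)) with (exp z * (exp (r * x) * / exp z)) by (field; lra).
    apply Rmult_le_compat_l; lra. }
  assert (B : exp z * (1 + (r * y + - z)) <= exp (r * y)).
  { replace (exp (r * y)) with (exp z * (exp (r * y) * / exp z)) by (field; lra).
    apply Rmult_le_compat_l; lra. }
  assert (t * (r * x + - z) + (1 - t) * (r * y + - z) = 0) by (unfold z; ring).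
  nra.
Qed.

Lemma cont_off0 (F F0 : R -> R) l u : u <> 0 -> (forall v, v <> 0 -> F v = F0 v) ->
  is_derive F0 u l -> continuity_pt F u.
Proof.
  intros Hu Heq Hd. apply continuity_pt_filterlim.
  apply (ex_derive_continuous F u). exists l.
  apply (is_derive_ext_loc F0 F); auto.
  destruct (Rlt_or_le u 0) as [Hn|Hp].
  - apply (loc_eq F F0 (u - 1) 0); [lra|]. intros; apply Heq; lra.
  - apply (loc_eq F F0 0 (u + 1)); [lra|]. intros; apply Heq; lra.
Qed.

Section Halves.
Variables F F0 dF ddF : R -> R.
Hypothesis Hc0 : continuity_pt F 0.
Hypothesis Heq : forall v, v <> 0 -> F v = F0 v.
Hypothesis Hd : forall v, v <> 0 -> is_derive F0 v (dF v).
Hypothesis Hdd : forall v, v <> 0 -> is_derive dF v (ddF v).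

Lemma contF : forall u, continuity_pt F u.
Proof.
  intro u. destruct (Req_dec u 0) as [->|Hu]; auto.
  apply (cont_off0 F F0 (dF u)); auto.
Qed.

Lemma incr_halves : (forall v, v <> 0 -> 0 < dF v) -> incr F.
Proof.
  intros Hp.
  assert (Hh : forall x y, x < y -> (0 <= x \/ y <= 0) -> F x < F y).
  { intros x y Hxy Hor. apply (mono_lt F F0 dF); auto.
    - intros; apply contF.
    - intros; apply Heq; lra.
    - intros; apply Hd; lra.
    - intros; apply Hp; lra. }
  intros x y Hxy.
  destruct (Rle_or_lt 0 x); [apply Hh; auto|].
  destruct (Rle_or_lt y 0); [apply Hh; auto|].
  apply Rlt_trans with (F 0); apply Hh; lra.
Qed.

Lemma conv_halves m : (forall v, v <> 0 -> 0 <= ddF v) ->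
  (forall y, F 0 + m * y <= F y) -> conv3 F.
Proof.
  intros Hpp Hs. apply (glue F m Hs).
  - intros u v w Hu Huvw. apply (conv3_deriv F F0 dF); auto.
    + intros; apply contF.
    + intros; apply Heq; lra.
    + intros; apply Hd; lra.
    + intros z1 z2 H1 H2 H3. apply (mono_le dF dF ddF); auto.
      * intros; apply (deriv_cont dF _ (ddF u0)); apply Hdd; lra.
      * intros; apply Hdd; lra.
      * intros; apply Hpp; lra.
  - intros u v w Hw Huvw. apply (conv3_deriv F F0 dF); auto.
    + intros; apply contF.
    + intros; apply Heq; lra.
    + intros; apply Hd; lra.
    + intros z1 z2 H1 H2 H3. apply (mono_le dF dF ddF); auto.
      * intros; apply (deriv_cont dF _ (ddF u0)); apply Hdd; lra.
      * intros; apply Hdd; lra.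
      * intros; apply Hpp; lra.
Qed.
End Halves.

Lemma mono_all (k dk : R -> R) x y : x <= y -> (forall u, is_derive k u (dk u)) ->
  (forall u, 0 <= dk u) -> k x <= k y.
Proof.
  intros Hxy Hd Hp. apply (mono_le k k dk); auto.
  intros; apply (deriv_cont k u (dk u)); auto.
Qed.

Lemma ineqK s : 0 <= s -> (2 - s) * exp s <= 2 + s.
Proof.
  intro Hs.
  assert (H := mono_all (fun s => 2 + s - (2 - s) * exp s) (fun s => 1 - (1 - s) * exp s) 0 s Hs).
  cbv beta in H. rewrite exp_0 in H. cut (0 <= 2 + s - (2 - s) * exp s); [lra|].
  replace 0 with (2 + 0 - (2 - 0) * 1) by ring. apply H.
  - intro u. auto_derive; auto. ring.
  - intro u. pose proof (exp_ineq1_le (- u)). pose proof (exp_pos u).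
    assert (exp u * exp (- u) = 1) by (rewrite <- exp_plus; replace (u + - u) with 0 by ring; apply exp_0).
    nra.
Qed.

Lemma ineqM y : 0 <= y -> 2 <= exp y * (y ^ 2 - 2 * y + 2).
Proof.
  intro Hy.
  assert (H := mono_all (fun s => exp s * (s ^ 2 - 2 * s + 2)) (fun s => exp s * s ^ 2) 0 y Hy).
  cbv beta in H. rewrite exp_0 in H. replace (1 * (0 ^ 2 - 2 * 0 + 2)) with 2 in H by ring. apply H.
  - intro u. auto_derive; auto. ring.
  - intro u. pose proof (exp_pos u). nra.
Qed.

Lemma ineqM' y : y <= 0 -> exp y * (y ^ 2 - 2 * y + 2) <= 2.
Proof.
  intro Hy.
  assert (H := mono_all (fun s => exp s * (s ^ 2 - 2 * s + 2)) (fun s => exp s * s ^ 2) y 0 Hy).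
  cbv beta in H. rewrite exp_0 in H. replace (1 * (0 ^ 2 - 2 * 0 + 2)) with 2 in H by ring. apply H.
  - intro u. auto_derive; auto. ring.
  - intro u. pose proof (exp_pos u). nra.
Qed.

Lemma ineqK2 x y : x <= y -> exp x - 1 - x - x ^ 2 / 2 <= exp y - 1 - y - y ^ 2 / 2.
Proof.
  intro Hy.
  apply (mono_all (fun s => exp s - 1 - s - s ^ 2 / 2) (fun s => exp s - 1 - s)); auto.
  - intro u. auto_derive; auto. field.
  - intro u. pose proof (exp_ineq1_le u). lra.
Qed.

Definition G0 y := (exp y - 1) / y.
Definition G y := if Req_EM_T y 0 then 1 else G0 y.
Definition dG y := (y * exp y - exp y + 1) / y ^ 2.
Definition ddG y := (exp y * (y ^ 2 - 2 * y + 2) - 2) / y ^ 3.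

Lemma G_eq v : v <> 0 -> G v = G0 v.
Proof. intro H. unfold G. destruct (Req_EM_T v 0); [contradiction|auto]. Qed.

Lemma G_d v : v <> 0 -> is_derive G0 v (dG v).
Proof. intro H. unfold G0, dG. auto_derive; auto. field; auto. Qed.

Lemma G_dd v : v <> 0 -> is_derive dG v (ddG v).
Proof. intro H. unfold dG, ddG. auto_derive. { repeat apply Rmult_integral_contrapositive_currified; auto; lra. } field; auto. Qed.

Lemma G_c0 : continuity_pt G 0.
Proof.
  intros eps Heps. destruct (derivable_pt_lim_exp_0 eps Heps) as [del Hdel].
  exists del. split; [apply cond_pos|]. intros x [[_ Hx] Hxd].
  simpl in *. unfold R_dist in *. rewrite Rminus_0_r in Hxd.
  assert (x <> 0) by auto.
  rewrite G_eq; auto. unfold G. destruct (Req_EM_T 0 0); [|congruence].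
  specialize (Hdel x H Hxd). rewrite Rplus_0_l, exp_0 in Hdel. exact Hdel.
Qed.

Lemma G_dpos v : v <> 0 -> 0 < dG v.
Proof.
  intro H. unfold dG. apply Rdiv_lt_0_compat; [|simpl; rewrite Rmult_1_r; apply Rsqr_pos_lt; auto].
  pose proof (exp_ineq1 (- v)) as E. pose proof (exp_pos v).
  assert (exp v * exp (- v) = 1) by (rewrite <- exp_plus; replace (v + - v) with 0 by ring; apply exp_0).
  assert (- v <> 0) by lra. specialize (E H2). nra.
Qed.

Lemma divpos_le a b v : 0 < v -> a * v <= b -> a <= b / v.
Proof.
  intros Hv H. assert (W : v * / v = 1) by (field; lra).
  assert (0 < / v) by (apply Rinv_0_lt_compat; auto). unfold Rdiv.
  replace a with (a * v * / v) by (field; lra). apply Rmult_le_compat_r; lra.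
Qed.

Lemma divneg_le a b v : v < 0 -> b <= a * v -> a <= b / v.
Proof.
  intros Hv H. assert (W : v * / v = 1) by (field; lra).
  assert (/ v < 0) by (apply Rinv_lt_0_compat; auto). unfold Rdiv.
  replace a with (a * v * / v) by (field; lra). nra.
Qed.

Lemma G_ddpos v : v <> 0 -> 0 <= ddG v.
Proof.
  intro H. unfold ddG. destruct (Rlt_or_le 0 v) as [Hp|Hn].
  - apply divpos_le; [apply pow_lt; auto|]. pose proof (ineqM v). lra.
  - assert (v < 0) by lra. apply divneg_le.
    + replace (v ^ 3) with (v * (v * v)) by ring. assert (0 < v * v) by nra. nra.
    + pose proof (ineqM' v). lra.
Qed.

Lemma G_pos v : 0 < G v.
Proof.
  destruct (Req_dec v 0) as [->|H].
  - unfold G. destruct (Req_EM_T 0 0); lra.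
  - rewrite G_eq; auto. unfold G0. pose proof (exp_ineq1 v H).
    destruct (Rlt_or_le 0 v) as [Hp|Hn].
    + apply Rdiv_lt_0_compat; lra.
    + assert (exp v < exp 0) by (apply exp_increasing; lra). rewrite exp_0 in H1.
      replace ((exp v - 1) / v) with ((1 - exp v) / (- v)) by (field; auto).
      apply Rdiv_lt_0_compat; lra.
Qed.

Lemma G_supp y : G 0 + / 2 * y <= G y.
Proof.
  unfold G at 1. destruct (Req_EM_T 0 0); [|congruence].
  destruct (Req_dec y 0) as [->|H].
  - unfold G. destruct (Req_EM_T 0 0); lra.
  - rewrite G_eq; auto. unfold G0.
    destruct (Rlt_or_le 0 y) as [Hp|Hn].
    + pose proof (ineqK2 0 y (Rlt_le _ _ Hp)). rewrite exp_0 in H0.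
      apply divpos_le; auto. nra.
    + pose proof (ineqK2 y 0 Hn). rewrite exp_0 in H0.
      apply divneg_le; [lra|]. nra.
Qed.

Lemma G_incr : incr G.
Proof.
  apply (incr_halves G G0 dG G_c0 G_eq G_d G_dpos).
Qed.

Lemma G_conv : conv3 G.
Proof.
  apply (conv_halves G G0 dG ddG G_c0 G_eq G_d G_dd (/ 2) G_ddpos G_supp).
Qed.

Definition P0 y := y / (1 - exp (- y)).
Definition P y := if Req_EM_T y 0 then 1 else P0 y.
Definition dP y := (1 - exp (- y) - y * exp (- y)) / (1 - exp (- y)) ^ 2.
Definition ddP y := exp (- y) * ((y - 2) + (y + 2) * exp (- y)) / (1 - exp (- y)) ^ 3.

Lemma P_eq v : v <> 0 -> P v = P0 v.
Proof. intro H. unfold P. destruct (Req_EM_T v 0); [contradiction|auto]. Qed.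

Lemma expm_prod y : exp y * exp (- y) = 1.
Proof. rewrite <- exp_plus; replace (y + - y) with 0 by ring; apply exp_0. Qed.

Lemma D_pos y : 0 < y -> 0 < 1 - exp (- y).
Proof. intro H. assert (exp (- y) < exp 0) by (apply exp_increasing; lra). rewrite exp_0 in H0. lra. Qed.
Lemma D_neg y : y < 0 -> 1 - exp (- y) < 0.
Proof. intro H. assert (exp 0 < exp (- y)) by (apply exp_increasing; lra). rewrite exp_0 in H0. lra. Qed.
Lemma D_nz y : y <> 0 -> 1 - exp (- y) <> 0.
Proof.
  intro H. destruct (Rlt_or_le 0 y). pose proof (D_pos y H0); lra.
  assert (y < 0) by lra. pose proof (D_neg y H1); lra.
Qed.

Lemma P_d v : v <> 0 -> is_derive P0 v (dP v).
Proof. intro H. pose proof (D_nz v H). unfold P0, dP. auto_derive; auto. field; auto. Qed.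

Lemma P_dd v : v <> 0 -> is_derive dP v (ddP v).
Proof.
  intro H. pose proof (D_nz v H). unfold dP, ddP. auto_derive.
  { repeat apply Rmult_integral_contrapositive_currified; auto; lra. }
  field; auto.
Qed.

Lemma Kp y : 0 <= y -> 2 - y <= (2 + y) * exp (- y).
Proof.
  intro H. pose proof (ineqK y H). pose proof (expm_prod y). pose proof (exp_pos (- y)).
  assert ((2 - y) * exp y * exp (- y) <= (2 + y) * exp (- y)) by (apply Rmult_le_compat_r; lra).
  nra.
Qed.

Lemma Kn y : y <= 0 -> (2 + y) * exp (- y) <= 2 - y.
Proof.
  intro H. pose proof (ineqK (- y)). replace (2 - - y) with (2 + y) in H0 by ring.
  replace (2 + - y) with (2 - y) in H0 by ring. apply H0; lra.
Qed.

Lemma P_dpos v : v <> 0 -> 0 < dP v.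
Proof.
  intro H. unfold dP. pose proof (D_nz v H).
  apply Rdiv_lt_0_compat; [|simpl; rewrite Rmult_1_r; apply Rsqr_pos_lt; auto].
  pose proof (exp_ineq1 v H). pose proof (expm_prod v). pose proof (exp_pos (- v)).
  assert ((1 + v) * exp (- v) < exp v * exp (- v)) by (apply Rmult_lt_compat_r; lra).
  nra.
Qed.

Lemma P_ddpos v : v <> 0 -> 0 <= ddP v.
Proof.
  intro H. unfold ddP. pose proof (exp_pos (- v)). destruct (Rlt_or_le 0 v) as [Hp|Hn].
  - pose proof (D_pos v Hp). apply divpos_le; [apply pow_lt; auto|].
    pose proof (Kp v (Rlt_le _ _ Hp)). rewrite Rmult_0_l. apply Rmult_le_pos; lra.
  - assert (v < 0) by lra. pose proof (D_neg v H1). apply divneg_le.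
    + set (D := 1 - exp (- v)) in *. replace (D ^ 3) with (D * (D * D)) by ring.
      assert (0 < D * D) by nra. nra.
    + pose proof (Kn v Hn). rewrite Rmult_0_l.
      assert (0 <= exp (- v) * (- (v - 2 + (v + 2) * exp (- v)))) by (apply Rmult_le_pos; lra).
      lra.
Qed.

Lemma P_supp y : P 0 + / 2 * y <= P y.
Proof.
  unfold P at 1. destruct (Req_EM_T 0 0); [|congruence].
  destruct (Req_dec y 0) as [->|H].
  - unfold P. destruct (Req_EM_T 0 0); lra.
  - rewrite P_eq; auto. unfold P0.
    destruct (Rlt_or_le 0 y) as [Hp|Hn].
    + pose proof (Kp y (Rlt_le _ _ Hp)). pose proof (D_pos y Hp).
      apply divpos_le; auto. nra.
    + assert (y < 0) by lra. pose proof (Kn y Hn). pose proof (D_neg y H0).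
      apply divneg_le; auto. nra.
Qed.

Lemma P_bounds y : y <> 0 -> Rabs (P y - 1) <= Rabs y.
Proof.
  intro H. pose proof (P_supp y) as S. unfold P at 1 in S. destruct (Req_EM_T 0 0); [|congruence].
  rewrite P_eq in *; auto. unfold P0 in *.
  pose proof (exp_ineq1_le (- y)). pose proof (exp_ineq1_le y).
  pose proof (expm_prod y). pose proof (exp_pos (- y)). pose proof (exp_pos y).
  destruct (Rlt_or_le 0 y) as [Hp|Hn].
  - pose proof (D_pos y Hp).
    assert (1 <= y / (1 - exp (- y))) by (apply divpos_le; auto; lra).
    assert (y / (1 - exp (- y)) <= 1 + y).
    { unfold Rdiv. apply (Rmult_le_reg_r (1 - exp (- y))); auto.
      rewrite Rmult_assoc, Rinv_l; [|lra].
      assert ((1 + y) * exp (- y) <= exp y * exp (- y)) by (apply Rmult_le_compat_r; lra).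
      nra. }
    rewrite !Rabs_right; lra.
  - assert (y < 0) by lra. pose proof (D_neg y H5).
    assert (y / (1 - exp (- y)) <= 1).
    { assert (W : (1 - exp (- y)) * / (1 - exp (- y)) = 1) by (field; lra).
      assert (/ (1 - exp (- y)) < 0) by (apply Rinv_lt_0_compat; auto).
      unfold Rdiv. nra. }
    rewrite Rabs_left1; [|lra]. rewrite Rabs_left; lra.
Qed.

Lemma P_c0 : continuity_pt P 0.
Proof.
  intros eps Heps. exists eps. split; auto. intros x [[_ Hx] Hxd].
  simpl in *. unfold R_dist in *. rewrite Rminus_0_r in Hxd.
  unfold P at 2. destruct (Req_EM_T 0 0); [|congruence].
  pose proof (P_bounds x (not_eq_sym Hx)). lra.
Qed.

Lemma P_pos v : 0 < P v.
Proof.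
  destruct (Req_dec v 0) as [->|H].
  - unfold P. destruct (Req_EM_T 0 0); lra.
  - rewrite P_eq; auto. unfold P0.
    destruct (Rlt_or_le 0 v) as [Hp|Hn].
    + apply Rdiv_lt_0_compat; auto. apply D_pos; auto.
    + assert (v < 0) by lra. pose proof (D_neg v H0).
      replace (v / (1 - exp (- v))) with ((- v) / (- (1 - exp (- v)))) by (field; lra).
      apply Rdiv_lt_0_compat; lra.
Qed.

Lemma P_incr : incr P.
Proof. apply (incr_halves P P0 dP P_c0 P_eq P_d P_dpos). Qed.

Lemma P_conv : conv3 P.
Proof. apply (conv_halves P P0 dP ddP P_c0 P_eq P_d P_dd (/ 2) P_ddpos P_supp). Qed.
Lemma f_repr a b c d x : a > b -> b >= c -> c > d -> d > 0 ->
  f_abcd a b c d x = ((ln a - ln b) / (ln c - ln d)) *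
    (exp ((ln b - ln c) * x) * (G ((ln a - ln b) * x) * P ((ln c - ln d) * x))).
Proof.
  intros Hab Hbc Hcd Hd.
  assert (Hp : ln b < ln a) by (apply ln_increasing; lra).
  assert (Hq : ln d < ln c) by (apply ln_increasing; lra).
  unfold f_abcd. destruct (Req_EM_T x 0) as [->|Hx].
  - rewrite !Rmult_0_r, exp_0. unfold G, P. destruct (Req_EM_T 0 0); [|congruence].
    rewrite !ln_div by lra. field. lra.
  - assert (Hpx : (ln a - ln b) * x <> 0) by (apply Rmult_integral_contrapositive_currified; lra).
    assert (Hqx : (ln c - ln d) * x <> 0) by (apply Rmult_integral_contrapositive_currified; lra).
    rewrite G_eq, P_eq; auto. unfold G0, P0.
    pose proof (D_nz _ Hqx) as HD.
    unfold Rpower.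
    replace ((ln b - ln c) * x) with (x * ln b + - (x * ln c)) by ring.
    replace ((ln a - ln b) * x) with (x * ln a + - (x * ln b)) by ring.
    replace (- ((ln c - ln d) * x)) with (x * ln d + - (x * ln c)) in * by ring.
    rewrite !exp_plus, !exp_Ropp in *.
    pose proof (exp_pos (x * ln a)). pose proof (exp_pos (x * ln b)).
    pose proof (exp_pos (x * ln c)). pose proof (exp_pos (x * ln d)).
    assert (exp (x * ln c) - exp (x * ln d) <> 0).
    { intro E. apply HD.
      replace (1 - exp (x * ln d) * / exp (x * ln c)) with ((exp (x * ln c) - exp (x * ln d)) * / exp (x * ln c)) by (field; lra).
      rewrite E; ring. }
    field. repeat split; try lra.
    all: replace (x * ln a + - (x * ln b)) with ((ln a - ln b) * x) by ring; auto.
Qed.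

Theorem theorem2p2 (a b c d : R) :
  a > b -> b >= c -> c > d -> d > 0 ->
  strictly_convex (f_abcd a b c d).
Proof.
  intros Hab Hbc Hcd Hd.
  assert (Hp : ln b < ln a) by (apply ln_increasing; lra).
  assert (Hq : ln d < ln c) by (apply ln_increasing; lra).
  assert (Hr : ln c <= ln b) by (apply ln_le; lra).
  set (p := ln a - ln b). set (q := ln c - ln d). set (r := ln b - ln c).
  assert (Pp : 0 < p) by (unfold p; lra). assert (Pq : 0 < q) by (unfold q; lra).
  assert (Pr : 0 <= r) by (unfold r; lra).
  set (H := fun x => G (p * x) * P (q * x)).
  assert (SH : strictly_convex H).
  { apply prod_strict.
    - intro; apply G_pos. - intro; apply P_pos.
    - apply (scale_incr G p Pp G_incr). - apply (scale_incr P q Pq P_incr).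
    - apply (scale_conv G p Pp), conv3_convexw, G_conv.
    - apply (scale_conv P q Pq), conv3_convexw, P_conv. }
  assert (SE : strictly_convex (fun x => exp (r * x) * H x)).
  { apply prod_strict2; auto.
    - intro; apply exp_pos.
    - intro; unfold H; apply Rmult_lt_0_compat; [apply G_pos|apply P_pos].
    - intros x y Hxy. assert (r * x <= r * y) by nra. destruct H0.
      + left; apply exp_increasing; auto.
      + rewrite H0; lra.
    - intros x y Hxy. unfold H. pose proof (G_incr (p * x) (p * y) ltac:(nra)).
      pose proof (P_incr (q * x) (q * y) ltac:(nra)).
      pose proof (G_pos (p * x)). pose proof (P_pos (q * x)). left.
      apply Rmult_le_0_lt_compat; lra.
    - apply exp_conv. }
  intros x y t Hxy Ht.
  rewrite !(f_repr a b c d); auto. fold p q r.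
  pose proof (SE x y t Hxy Ht). unfold H in H0. simpl in H0.
  assert (0 < p / q) by (apply Rdiv_lt_0_compat; auto).
  apply Rmult_lt_compat_l with (r := p / q) in H0; auto. lra.
Qed.
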